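(* Let $g\in L^1([0,1])$ with $g\ge 0$, let $m\in\mathbb{N}$, $A\in D_m$, and $\lambda\in(0,1)$. Then there exists an integer $n_\lambda>m$ such that for every $n\ge n_\lambda$ there are sets $A_0,A_1\in D_n$ with $A=A_0\cup A_1$ (disjoint) satisfying: (1) $\mu(A_0)=\mu(A_1)=\tfrac12\mu(A)$; (2) $\tfrac{\lambda}{2}\int_A g\,d\mu\le\int_{A_i}g\,d\mu\le\tfrac{1}{2\lambda}\int_A g\,d\mu$ for $i=0,1$; (3) $r_n\equiv(-1)^i$ on $A_i$ for $i=0,1$.
   Context: $\mu$ is Lebesgue measure on $[0,1]$. $r_n(x)=\operatorname{sign}(\sin(2^n\pi x))$ are the Rademacher functions. For $m\in\mathbb{N}$, $D_m$ denotes the family of all sets $A\subset[0,1]$ that are finite unions of dyadic intervals $[j/2^m,(j+1)/2^m)$, $j\in\{0,\dots,2^m-1\}$. *)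

(* Defs.v *)
From Stdlib Require Import Reals Lra List.
Open Scope R_scope.

Definition interval_cover (E : R -> Prop) (a b : nat -> R) : Prop :=
  (forall k, a k <= b k) /\ (forall x, E x -> exists k, a k <= x <= b k).

Definition cover_total (a b : nat -> R) (s : R) : Prop :=
  Un_cv (fun n => sum_f_R0 (fun k => b k - a k) n) s.

Definition outer_measure_is (E : R -> Prop) (r : R) : Prop :=
  (forall eps, 0 < eps -> exists a b s,
      interval_cover E a b /\ cover_total a b s /\ s <= r + eps) /\
  (forall a b s, interval_cover E a b -> cover_total a b s -> r <= s).

(** Caratheodory (= Lebesgue) measurability.  Test sets of infinite outer
    measure impose no condition, so only finite ones are tested. *)
Definition lebesgue_measurable (E : R -> Prop) : Prop :=
  forall T r, outer_measure_is T r ->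
    exists r1 r2, outer_measure_is (fun x => T x /\ E x) r1 /\
                  outer_measure_is (fun x => T x /\ ~ E x) r2 /\ r1 + r2 = r.

Definition measure_is (E : R -> Prop) (r : R) : Prop :=
  lebesgue_measurable E /\ outer_measure_is E r.

Definition unit_interval (x : R) : Prop := 0 <= x <= 1.

Definition measurable_on01 (g : R -> R) : Prop :=
  forall c, lebesgue_measurable (fun x => unit_interval x /\ c < g x).

(** Value of a pointwise sum  sum_i c_i 1_{E_i}(x)  of a simple function
    given as a list of (coefficient, set, measure of set). *)
Definition simple_eval (l : list (R * (R -> bool) * R)) (x : R) : R :=
  fold_right (fun (p : R * (R -> bool) * R) (acc : R) => (if snd (fst p) x then fst (fst p) else 0) + acc) 0 l.

Definition simple_integral (l : list (R * (R -> bool) * R)) : R :=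
  fold_right (fun (p : R * (R -> bool) * R) (acc : R) => fst (fst p) * snd p + acc) 0 l.

Definition simple_below (g : R -> R) (A : R -> Prop) (v : R) : Prop :=
  exists l : list (R * (R -> bool) * R),
    Forall (fun p => 0 <= fst (fst p) /\
                     measure_is (fun x => snd (fst p) x = true) (snd p) /\
                     (forall x, snd (fst p) x = true -> A x)) l /\
    (forall x, A x -> simple_eval l x <= g x) /\
    simple_integral l = v.

Definition integral_is (g : R -> R) (A : R -> Prop) (v : R) : Prop :=
  is_lub (simple_below g A) v.

Definition nonneg_L1_01 (g : R -> R) : Prop :=
  measurable_on01 g /\ (forall x, unit_interval x -> 0 <= g x) /\
  exists v, integral_is g unit_interval v.

Definition dyadic_family (m : nat) (A : R -> Prop) : Prop :=
  exists J : nat -> Prop, forall x,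
    A x <-> exists j : nat, (j < 2 ^ m)%nat /\ J j /\
              INR j / 2 ^ m <= x < (INR j + 1) / 2 ^ m.

Definition sgn (s : R) : R :=
  if Rlt_dec 0 s then 1 else if Rlt_dec s 0 then -1 else 0.

Definition rademacher (n : nat) (x : R) : R := sgn (sin (2 ^ n * PI * x)).

(* Main.v *)
Require Import Defs.
From Stdlib Require Import Reals Lra Lia List Classical ClassicalEpsilon ZArith.
Open Scope R_scope.

Lemma eps_le (x y : R) : (forall eps, 0 < eps -> x <= y + eps) -> x <= y.
Proof.
  intros H. destruct (Rle_dec x y) as [|Hn]; auto.
  assert (H1 := H ((x - y)/2) ltac:(lra)). lra.
Qed.

Lemma sum_ext (f g : nat -> R) n : (forall k, f k = g k) -> sum_f_R0 f n = sum_f_R0 g n.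
Proof. intros H; induction n; simpl; rewrite ?IHn, ?H; auto. Qed.

Lemma sum_nonneg (f : nat -> R) n : (forall k, 0 <= f k) -> 0 <= sum_f_R0 f n.
Proof. intros H; induction n; simpl; [apply H|]. specialize (H (S n)); lra. Qed.

Lemma sum_mono (f : nat -> R) n m : (forall k, 0 <= f k) -> (n <= m)%nat ->
  sum_f_R0 f n <= sum_f_R0 f m.
Proof.
  intros H Hnm; induction Hnm; [lra|]. simpl. specialize (H (S m)); lra.
Qed.

Lemma series_cv (f : nat -> R) B : (forall k, 0 <= f k) ->
  (forall n, sum_f_R0 f n <= B) ->
  exists s, Un_cv (sum_f_R0 f) s /\ s <= B /\ (forall n, sum_f_R0 f n <= s).
Proof.
  intros Hf HB.
  destruct (completeness (fun x => exists n, x = sum_f_R0 f n)) as [s [Hub Hl]].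
  - exists B. intros x [n ->]. auto.
  - exists (sum_f_R0 f 0). eauto.
  - exists s. split; [|split].
    + intros eps Heps.
      destruct (classic (exists N, sum_f_R0 f N > s - eps)) as [[N HN]|Hn].
      * exists N. intros n Hn. unfold R_dist.
        assert (sum_f_R0 f N <= sum_f_R0 f n) by (apply sum_mono; auto).
        assert (sum_f_R0 f n <= s) by (apply Hub; eauto).
        apply Rabs_def1; lra.
      * exfalso. assert (s <= s - eps); [|lra]. apply Hl. intros x [n ->].
        apply Rnot_gt_le. intro; apply Hn; eauto.
    + apply Hl. intros x [n ->]. auto.
    + intros n; apply Hub; eauto.
Qed.

Lemma cv_le (u : nat -> R) s B : Un_cv u s -> (forall n, u n <= B) -> s <= B.
Proof.
  intros Hu HB. destruct (Rle_dec s B) as [|Hn]; auto.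
  destruct (Hu (s - B)) as [N HN]; [lra|]. specialize (HN N (le_n _)).
  unfold R_dist in HN. specialize (HB N). apply Rabs_def2 in HN. lra.
Qed.

Lemma cv_ub (f : nat -> R) s : (forall k, 0 <= f k) -> Un_cv (sum_f_R0 f) s ->
  forall n, sum_f_R0 f n <= s.
Proof.
  intros Hf Hu n. destruct (Rle_dec (sum_f_R0 f n) s) as [|Hn]; auto.
  destruct (Hu (sum_f_R0 f n - s)) as [N HN]; [lra|].
  specialize (HN (max n N) ltac:(lia)). unfold R_dist in HN. apply Rabs_def2 in HN.
  assert (sum_f_R0 f n <= sum_f_R0 f (max n N)) by (apply sum_mono; auto; lia). lra.
Qed.

Definition OMle (S : R -> Prop) (B : R) : Prop :=
  exists a b, interval_cover S a b /\ forall n, sum_f_R0 (fun k => b k - a k) n <= B.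

Definition OM (S : R -> Prop) (r : R) : Prop :=
  (forall B, OMle S B -> r <= B) /\ (forall eps, 0 < eps -> OMle S (r + eps)).

Lemma OMle_nonneg S B : OMle S B -> 0 <= B.
Proof.
  intros (a & b & [Hab _] & H). specialize (H 0%nat). simpl in H. specialize (Hab 0%nat). lra.
Qed.

Lemma OMle_B S B B' : OMle S B -> B <= B' -> OMle S B'.
Proof. intros (a & b & Hc & H) HB. exists a, b. split; auto. intros n; specialize (H n); lra. Qed.

Lemma OMle_set S T B : (forall x, S x -> T x) -> OMle T B -> OMle S B.
Proof.
  intros HST (a & b & [Hab Hc] & H). exists a, b. repeat split; auto.
Qed.

Lemma OM_unique S r1 r2 : OM S r1 -> OM S r2 -> r1 = r2.
Proof.
  intros [H1 H1'] [H2 H2'].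
  assert (r1 <= r2) by (apply eps_le; intros; apply H1, H2'; auto).
  assert (r2 <= r1) by (apply eps_le; intros; apply H2, H1'; auto). lra.
Qed.

Lemma OM_omi S r : OM S r -> outer_measure_is S r.
Proof.
  intros [H1 H2]. split.
  - intros eps Heps. destruct (H2 eps Heps) as (a & b & [Hab Hc] & Hs).
    destruct (series_cv (fun k => b k - a k) (r + eps)) as (s & Hs1 & Hs2 & _); auto.
    { intros k; specialize (Hab k); lra. }
    exists a, b, s. repeat split; auto.
  - intros a b s [Hab Hc] Ht. apply H1. exists a, b. repeat split; auto.
    apply cv_ub; auto. intros k; specialize (Hab k); lra.
Qed.

Lemma omi_OM S r : outer_measure_is S r -> OM S r.
Proof.
  intros [H1 H2]. split.
  - intros B (a & b & [Hab Hc] & Hs).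
    destruct (series_cv (fun k => b k - a k) B) as (s & Hs1 & Hs2 & _); auto.
    { intros k; specialize (Hab k); lra. }
    assert (r <= s) by (apply (H2 a b s); [split; auto | exact Hs1]). lra.
  - intros eps Heps. destruct (H1 eps Heps) as (a & b & s & [Hab Hc] & Ht & Hs).
    exists a, b. repeat split; auto. intros n.
    assert (sum_f_R0 (fun k => b k - a k) n <= s); [|lra].
    apply cv_ub; auto. intros k; specialize (Hab k); lra.
Qed.

Lemma om_bound_aux S : bound (fun x => OMle S (- x)).
Proof. exists 0. intros x Hx. apply OMle_nonneg in Hx. lra. Qed.

Lemma om_ne_aux S : (exists B, OMle S B) -> exists x, OMle S (- x).
Proof. intros [B HB]. exists (-B). rewrite Ropp_involutive. auto. Qed.

Definition om (S : R -> Prop) : R :=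
  match excluded_middle_informative (exists B, OMle S B) with
  | left H => - proj1_sig (completeness _ (om_bound_aux S) (om_ne_aux S H))
  | right _ => 0
  end.

Lemma om_spec S B : OMle S B -> OM S (om S).
Proof.
  intros HB. unfold om. destruct excluded_middle_informative as [H|H];
    [|exfalso; eauto].
  destruct completeness as [m [Hub Hl]]. simpl. split.
  - intros B' HB'. assert (- B' <= m); [|lra]. apply Hub. rewrite Ropp_involutive; auto.
  - intros eps Heps. apply NNPP. intros Hn.
    assert (m <= m - eps); [|lra]. apply Hl. intros x Hx.
    destruct (Rle_dec x (m - eps)) as [|Hx']; auto. exfalso. apply Hn.
    apply (OMle_B _ (-x)); auto. lra.
Qed.

Lemma om_le S B : OMle S B -> om S <= B.
Proof. intros H. apply (proj1 (om_spec S B H)). auto. Qed.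

Lemma om_approx S B eps : OMle S B -> 0 < eps -> OMle S (om S + eps).
Proof. intros H He. apply (proj2 (om_spec S B H)). auto. Qed.

Lemma om_nonneg S B : OMle S B -> 0 <= om S.
Proof.
  intros H. apply eps_le. intros eps He. apply OMle_nonneg with S.
  apply (om_approx S B); auto.
Qed.

Lemma om_mono S T B : (forall x, S x -> T x) -> OMle T B -> om S <= om T.
Proof.
  intros HST HT. apply eps_le. intros eps He. apply (om_le S).
  apply (OMle_set S T); auto. apply (om_approx T B); auto.
Qed.

Lemma OMle_ext S T B : (forall x, S x <-> T x) -> OMle S B -> OMle T B.
Proof. intros H. apply OMle_set. intros x; apply H. Qed.

Lemma om_ext S T : (forall x, S x <-> T x) -> om S = om T.
Proof.
  intros H. destruct (classic (exists B, OMle S B)) as [[B HB]|Hn].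
  - assert (HT : OMle T B) by (apply (OMle_ext S); auto).
    apply Rle_antisym; [apply (om_mono _ _ B)|apply (om_mono _ _ B)]; auto;
      intros x; apply H.
  - assert (Hn' : ~ exists B, OMle T B).
    { intros [B HB]. apply Hn. exists B. apply (OMle_ext T); auto. firstorder. }
    unfold om. destruct excluded_middle_informative; [contradiction|].
    destruct excluded_middle_informative; [contradiction|]. auto.
Qed.

Lemma OMle_interval a b : a <= b -> OMle (fun x => a <= x <= b) (b - a).
Proof.
  intros Hab. exists (fun _ => a), (fun k => match k with O => b | _ => a end).
  repeat split.
  - intros [|k]; lra.
  - intros x Hx. exists O. lra.
  - intros n. induction n; simpl; lra.
Qed.

Lemma OMle_empty S : (forall x, ~ S x) -> OMle S 0.
Proof.
  intros H. apply (OMle_set S (fun x => 0 <= x <= 0)).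
  - intros x Hx; exfalso; eapply H; eauto.
  - apply (OMle_B _ (0 - 0)); [apply OMle_interval|]; lra.
Qed.

Definition ilv (u v : nat -> R) (k : nat) : R :=
  if Nat.even k then u (Nat.div2 k) else v (Nat.div2 k).

Lemma ev2 n : Nat.even (2*n) = true /\ Nat.div2 (2*n) = n /\
  Nat.even (S (2*n)) = false /\ Nat.div2 (S (2*n)) = n.
Proof.
  induction n; simpl; auto. replace (n + S (n + 0))%nat with (S (2*n)) by lia.
  simpl. destruct IHn as (A & B & C & D). simpl in *. rewrite A, B, C, D. auto.
Qed.

Lemma sum_ilv u v n : sum_f_R0 (ilv u v) (S (2*n)) = sum_f_R0 u n + sum_f_R0 v n.
Proof.
  induction n.
  - simpl. unfold ilv. simpl. lra.
  - replace (S (2 * S n)) with (S (S (S (2*n)))) by lia.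
    change (sum_f_R0 (ilv u v) (S (S (S (2 * n))))) with
      (sum_f_R0 (ilv u v) (S (2*n)) + ilv u v (S (S (2*n))) + ilv u v (S (S (S (2*n))))).
    rewrite IHn.
    assert (E1 : ilv u v (S (S (2*n))) = u (S n)).
    { unfold ilv. replace (S (S (2*n))) with (2 * S n)%nat by lia.
      destruct (ev2 (S n)) as (A & B & _). rewrite A, B. auto. }
    assert (E2 : ilv u v (S (S (S (2*n)))) = v (S n)).
    { unfold ilv. replace (S (S (S (2*n)))) with (S (2 * S n))%nat by lia.
      destruct (ev2 (S n)) as (_ & _ & A & B). rewrite A, B. auto. }
    rewrite E1, E2. simpl. lra.
Qed.

Lemma OMle_union P0 Q0 B1 B2 : OMle P0 B1 -> OMle Q0 B2 ->
  OMle (fun x => P0 x \/ Q0 x) (B1 + B2).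
Proof.
  intros (a1 & b1 & [Hab1 Hc1] & H1) (a2 & b2 & [Hab2 Hc2] & H2).
  exists (ilv a1 a2), (ilv b1 b2). repeat split.
  - intros k. unfold ilv. destruct (Nat.even k); auto.
  - intros x [Hx|Hx].
    + destruct (Hc1 x Hx) as [k Hk]. exists (2*k)%nat. unfold ilv.
      destruct (ev2 k) as (A & B & _). rewrite A, B. auto.
    + destruct (Hc2 x Hx) as [k Hk]. exists (S (2*k))%nat. unfold ilv.
      destruct (ev2 k) as (_ & _ & A & B). rewrite A, B. auto.
  - intros n.
    assert (Hnn : forall k, 0 <= ilv b1 b2 k - ilv a1 a2 k).
    { intros k. unfold ilv. destruct (Nat.even k); [specialize (Hab1 (Nat.div2 k))|specialize (Hab2 (Nat.div2 k))]; lra. }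
    apply Rle_trans with (sum_f_R0 (fun k => ilv b1 b2 k - ilv a1 a2 k) (S (2*n))).
    { apply sum_mono; auto; lia. }
    rewrite (sum_ext _ (ilv (fun k => b1 k - a1 k) (fun k => b2 k - a2 k))).
    + rewrite sum_ilv. specialize (H1 n); specialize (H2 n); lra.
    + intros k; unfold ilv; destruct (Nat.even k); auto.
Qed.

Lemma OMle_shift S B t : OMle S B -> OMle (fun x => S (x - t)) B.
Proof.
  intros (a & b & [Hab Hc] & H). exists (fun k => a k + t), (fun k => b k + t).
  repeat split.
  - intros k; specialize (Hab k); lra.
  - intros x Hx. destruct (Hc _ Hx) as [k Hk]. exists k. lra.
  - intros n. rewrite (sum_ext _ (fun k => b k - a k)); auto. intros k; lra.
Qed.

Lemma om_shift S B t : OMle S B -> om (fun x => S (x - t)) = om S.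
Proof.
  intros HB. apply Rle_antisym.
  - apply eps_le. intros eps He. apply om_le. apply OMle_shift. apply (om_approx _ B); auto.
  - apply eps_le. intros eps He. apply om_le.
    apply (OMle_ext (fun x => (fun y => S (y - t)) (x - - t))).
    + intros x. replace (x - - t - t) with x by lra. tauto.
    + apply (OMle_shift (fun y => S (y - t)) _ (-t)). apply (om_approx _ B); auto. apply OMle_shift; auto.
Qed.

Lemma om_sub S S1 S2 B1 B2 : (forall x, S x -> S1 x \/ S2 x) -> OMle S1 B1 -> OMle S2 B2 ->
  om S <= om S1 + om S2.
Proof.
  intros H H1 H2. apply eps_le. intros eps He. apply om_le.
  apply (OMle_set S (fun x => S1 x \/ S2 x)); auto.
  replace (om S1 + om S2 + eps) with ((om S1 + eps/2) + (om S2 + eps/2)) by lra.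
  apply OMle_union; [apply (om_approx _ B1)|apply (om_approx _ B2)]; auto; lra.
Qed.

Definition meas (E : R -> Prop) : Prop := forall T B, OMle T B ->
  om (fun x => T x /\ E x) + om (fun x => T x /\ ~ E x) <= om T.

Lemma meas_eq E T B : meas E -> OMle T B ->
  om (fun x => T x /\ E x) + om (fun x => T x /\ ~ E x) = om T.
Proof.
  intros HE HT. apply Rle_antisym; [apply (HE T B); auto|].
  apply (om_sub _ _ _ B B).
  - intros x Hx. destruct (classic (E x)); auto.
  - apply (OMle_set _ T); tauto.
  - apply (OMle_set _ T); tauto.
Qed.

Lemma meas_leb E : meas E -> lebesgue_measurable E.
Proof.
  intros HE T r Hr. apply omi_OM in Hr.
  assert (HT : OMle T (r + 1)) by (apply (proj2 Hr); lra).
  assert (r = om T) by (apply (OM_unique T); auto; apply (om_spec T (r+1)); auto). subst r.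
  exists (om (fun x => T x /\ E x)), (om (fun x => T x /\ ~ E x)). split; [|split].
  - apply OM_omi. apply (om_spec _ (om T + 1)). apply (OMle_set _ T); tauto.
  - apply OM_omi. apply (om_spec _ (om T + 1)). apply (OMle_set _ T); tauto.
  - apply (meas_eq E T (om T + 1)); auto.
Qed.

Lemma leb_meas E : lebesgue_measurable E -> meas E.
Proof.
  intros HE T B HT. destruct (HE T (om T)) as (r1 & r2 & H1 & H2 & H3).
  { apply OM_omi. apply (om_spec T B); auto. }
  apply omi_OM in H1. apply omi_OM in H2.
  assert (G1 : OMle (fun x => T x /\ E x) B) by (apply (OMle_set _ T); [tauto|auto]).
  assert (G2 : OMle (fun x => T x /\ ~ E x) B) by (apply (OMle_set _ T); [tauto|auto]).
  rewrite <- (OM_unique _ _ _ H1 (om_spec _ B G1)).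
  rewrite <- (OM_unique _ _ _ H2 (om_spec _ B G2)).
  lra.
Qed.

Lemma meas_ext E F : meas E -> (forall x, E x <-> F x) -> meas F.
Proof.
  intros HE H T B HT.
  rewrite (om_ext (fun x => T x /\ F x) (fun x => T x /\ E x)) by (intros x; rewrite H; tauto).
  rewrite (om_ext (fun x => T x /\ ~ F x) (fun x => T x /\ ~ E x)) by (intros x; rewrite H; tauto).
  apply (HE T B); auto.
Qed.

Lemma meas_compl E : meas E -> meas (fun x => ~ E x).
Proof.
  intros HE T B HT.
  rewrite (om_ext (fun x => T x /\ ~ ~ E x) (fun x => T x /\ E x)).
  - rewrite Rplus_comm. apply (HE T B); auto.
  - intros x. split; intros [A C]; split; auto. apply NNPP; auto.
Qed.

Lemma meas_inter E F : meas E -> meas F -> meas (fun x => E x /\ F x).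
Proof.
  intros HE HF T B HT.
  assert (HTE : OMle (fun x => T x /\ E x) B) by (apply (OMle_set _ T); tauto).
  rewrite <- (meas_eq E T B HE HT).
  rewrite <- (meas_eq F _ B HF HTE).
  rewrite (om_ext (fun x => T x /\ E x /\ F x) (fun x => (T x /\ E x) /\ F x)) by tauto.
  assert (om (fun x => T x /\ ~ (E x /\ F x)) <=
          om (fun x => (T x /\ E x) /\ ~ F x) + om (fun x => T x /\ ~ E x)); [|lra].
  apply (om_sub _ _ _ B B).
  - intros x [Hx Hn]. destruct (classic (E x)); [left|right]; tauto.
  - apply (OMle_set _ T); tauto.
  - apply (OMle_set _ T); tauto.
Qed.

Lemma meas_union E F : meas E -> meas F -> meas (fun x => E x \/ F x).
Proof.
  intros HE HF. apply (meas_ext (fun x => ~ (~ E x /\ ~ F x))).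
  - apply meas_compl, meas_inter; apply meas_compl; auto.
  - intros x. split; [|tauto]. intros H. apply NNPP. tauto.
Qed.

Lemma meas_empty : meas (fun _ => False).
Proof.
  intros T B HT.
  assert (om (fun x => T x /\ False) <= 0) by (apply om_le, OMle_empty; tauto).
  assert (om (fun x => T x /\ ~ False) <= om T) by (apply (om_mono _ _ B); tauto). lra.
Qed.

Lemma meas_half c : meas (fun x => x < c).
Proof.
  intros T B HT. apply eps_le. intros eps He.
  destruct (om_approx T B eps HT He) as (a & b & [Hab Hc] & Hs).
  set (f1 := fun k => Rmin (b k) c - Rmin (a k) c).
  set (f2 := fun k => Rmax (b k) c - Rmax (a k) c).
  assert (Hf1 : forall k, 0 <= f1 k).
  { intros k; specialize (Hab k); unfold f1, Rmin, Rmax; repeat destruct Rle_dec; lra. }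
  assert (Hf2 : forall k, 0 <= f2 k).
  { intros k; specialize (Hab k); unfold f2, Rmin, Rmax; repeat destruct Rle_dec; lra. }
  assert (Hf : forall k, f1 k + f2 k = b k - a k).
  { intros k; unfold f1, f2, Rmin, Rmax; repeat destruct Rle_dec; lra. }
  assert (Hp : forall n, sum_f_R0 f1 n + sum_f_R0 f2 n <= om T + eps).
  { intros n. rewrite <- plus_sum. rewrite (sum_ext _ (fun k => b k - a k)); auto. }
  destruct (series_cv f1 (om T + eps)) as (s1 & Hs1 & _ & Hs1'); auto.
  { intros n; specialize (Hp n); assert (0 <= sum_f_R0 f2 n) by (apply sum_nonneg; auto); lra. }
  destruct (series_cv f2 (om T + eps)) as (s2 & Hs2 & _ & Hs2'); auto.
  { intros n; specialize (Hp n); assert (0 <= sum_f_R0 f1 n) by (apply sum_nonneg; auto); lra. }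
  assert (s1 + s2 <= om T + eps).
  { apply (cv_le (fun i => sum_f_R0 f1 i + sum_f_R0 f2 i)); auto. apply CV_plus; auto. }
  assert (om (fun x => T x /\ x < c) <= s1).
  { apply om_le. exists (fun k => Rmin (a k) c), (fun k => Rmin (b k) c). repeat split.
    - intros k; specialize (Hab k); unfold Rmin; repeat destruct Rle_dec; lra.
    - intros x [Hx Hxc]. destruct (Hc x Hx) as [k Hk]. exists k.
      unfold Rmin; repeat destruct Rle_dec; lra.
    - exact Hs1'. }
  assert (om (fun x => T x /\ ~ x < c) <= s2).
  { apply om_le. exists (fun k => Rmax (a k) c), (fun k => Rmax (b k) c). repeat split.
    - intros k; specialize (Hab k); unfold Rmax; repeat destruct Rle_dec; lra.
    - intros x [Hx Hxc]. destruct (Hc x Hx) as [k Hk]. exists k.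
      unfold Rmax; repeat destruct Rle_dec; lra.
    - exact Hs2'. }
  lra.
Qed.

Lemma meas_Ico c d : meas (fun x => c <= x < d).
Proof.
  apply (meas_ext (fun x => ~ x < c /\ x < d)).
  - apply meas_inter; [apply meas_compl|]; apply meas_half.
  - intros x; lra.
Qed.

Lemma meas_fin (J : nat -> Prop) (lo hi : nat -> R) N :
  meas (fun x => exists j, (j < N)%nat /\ J j /\ lo j <= x < hi j).
Proof.
  induction N.
  - apply (meas_ext (fun _ => False)); [apply meas_empty|]. intros x; split; [tauto|].
    intros (j & Hj & _); lia.
  - destruct (classic (J N)) as [HJ|HJ].
    + apply (meas_ext (fun x => (exists j, (j < N)%nat /\ J j /\ lo j <= x < hi j) \/
                               lo N <= x < hi N)).
      * apply meas_union; auto. apply meas_Ico.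
      * intros x; split.
        -- intros [(j & Hj & Hj2 & Hj3)|Hx]; [exists j; split; auto|exists N; auto].
        -- intros (j & Hj & Hj2 & Hj3). destruct (Nat.eq_dec j N); [subst; auto|].
           left. exists j. split; auto; lia.
    + apply (meas_ext _ _ IHN). intros x; split.
      * intros (j & Hj & Hj2 & Hj3). exists j. split; auto.
      * intros (j & Hj & Hj2 & Hj3). exists j. split; auto.
        destruct (Nat.eq_dec j N); [subst; contradiction|lia].
Qed.

Lemma dyadic_meas n S : dyadic_family n S -> meas S.
Proof.
  intros [J HJ]. apply (meas_ext _ _ (meas_fin J (fun j => INR j / 2 ^ n)
    (fun j => (INR j + 1) / 2 ^ n) (2 ^ n))).
  intros x. rewrite HJ. tauto.
Qed.

Definition Par (h p : R) (x : R) : Prop :=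
  exists i : nat, (2 * INR i + p) * h <= x < (2 * INR i + p + 1) * h.

Definition fl (y : R) : Z := (up y - 1)%Z.

Lemma fl_spec y : IZR (fl y) <= y < IZR (fl y) + 1.
Proof. unfold fl. rewrite minus_IZR. destruct (archimed y). simpl. lra. Qed.

Lemma sum_fin (f : nat -> R) h K : (forall k, 0 <= f k <= h) -> (forall k, (K < k)%nat -> f k = 0) ->
  forall n, sum_f_R0 f n <= INR (S K) * h.
Proof.
  intros Hf HK n. assert (0 <= h) by (destruct (Hf O); lra).
  assert (sum_f_R0 f n <= INR (S (min n K)) * h).
  { induction n.
    - simpl. destruct (Hf O). lra.
    - simpl sum_f_R0. destruct (le_lt_dec (S n) K).
      + rewrite (Nat.min_l (S n) K) by lia. rewrite (Nat.min_l n K) in IHn by lia.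
        rewrite (S_INR (S n)), Rmult_plus_distr_r, Rmult_1_l. destruct (Hf (S n)). lra.
      + rewrite HK by lia. rewrite (Nat.min_r (S n) K) by lia.
        rewrite (Nat.min_r n K) in IHn by lia. lra. }
  apply Rle_trans with (INR (S (min n K)) * h); auto.
  apply Rmult_le_compat_r; auto. apply le_INR. lia.
Qed.

Lemma Par_interval h p a b : 0 < h -> a <= b ->
  OMle (fun x => a <= x <= b /\ Par h p x) ((b - a) / 2 + 2 * h).
Proof.
  intros Hh Hab.
  set (ya := (a / h - p) / 2). set (yb := (b / h - p) / 2).
  set (z0 := fl ya). set (z1 := fl yb).
  destruct (fl_spec ya) as [Ha1 Ha2]. destruct (fl_spec yb) as [Hb1 Hb2].
  fold z0 in Ha1, Ha2. fold z1 in Hb1, Hb2.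
  assert (Hyab : ya <= yb).
  { unfold ya, yb. unfold Rdiv. apply Rmult_le_compat_r; [lra|].
    apply Rplus_le_compat_r. apply Rmult_le_compat_r; auto. left; apply Rinv_0_lt_compat; auto. }
  assert (Hz : (z0 <= z1)%Z).
  { apply Z.lt_succ_r. apply lt_IZR. rewrite succ_IZR. lra. }
  set (K := Z.to_nat (z1 - z0)).
  assert (HK : INR K = IZR z1 - IZR z0).
  { unfold K. rewrite INR_IZR_INZ. rewrite Z2Nat.id by lia. apply minus_IZR. }
  exists (fun k => if (k <=? K)%nat then (2 * (IZR z0 + INR k) + p) * h else 0),
         (fun k => if (k <=? K)%nat then (2 * (IZR z0 + INR k) + p) * h + h else 0).
  split; [split|].
  - intros k. destruct (k <=? K)%nat; lra.
  - intros x [Hx [i Hi]].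
    assert (Hyx : INR i <= (x / h - p) / 2 < INR i + / 2).
    { assert (x / h = x * / h) by auto.
      assert ((2 * INR i + p) <= x / h < 2 * INR i + p + 1); [|lra].
      split.
      - apply (Rmult_le_reg_r h); auto. unfold Rdiv. rewrite Rmult_assoc, Rinv_l; lra.
      - apply (Rmult_lt_reg_r h); auto. unfold Rdiv. rewrite Rmult_assoc, Rinv_l; lra. }
    assert (Hya : ya <= (x / h - p) / 2).
    { unfold ya. unfold Rdiv. apply Rmult_le_compat_r; [lra|].
      apply Rplus_le_compat_r. apply Rmult_le_compat_r; [left; apply Rinv_0_lt_compat; auto|lra]. }
    assert (Hyb : (x / h - p) / 2 <= yb).
    { unfold yb. unfold Rdiv. apply Rmult_le_compat_r; [lra|].
      apply Rplus_le_compat_r. apply Rmult_le_compat_r; [left; apply Rinv_0_lt_compat; auto|lra]. }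
    rewrite INR_IZR_INZ in Hyx.
    assert (H1 : (z0 <= Z.of_nat i)%Z).
    { apply Z.lt_succ_r. apply lt_IZR. rewrite succ_IZR. lra. }
    assert (H2 : (Z.of_nat i <= z1)%Z).
    { apply Z.lt_succ_r. apply lt_IZR. rewrite succ_IZR. lra. }
    exists (Z.to_nat (Z.of_nat i - z0)).
    assert (Hk : INR (Z.to_nat (Z.of_nat i - z0)) = IZR (Z.of_nat i) - IZR z0).
    { rewrite INR_IZR_INZ. rewrite Z2Nat.id by lia. apply minus_IZR. }
    assert (HkK : (Z.to_nat (Z.of_nat i - z0) <=? K)%nat = true).
    { apply Nat.leb_le. unfold K. apply Z2Nat.inj_le; lia. }
    rewrite HkK, Hk. rewrite INR_IZR_INZ in Hi.
    replace (IZR z0 + (IZR (Z.of_nat i) - IZR z0)) with (IZR (Z.of_nat i)) by lra. lra.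
  - intros n. apply Rle_trans with (INR (S K) * h).
    + apply (sum_fin _ h K).
      * intros k. destruct (k <=? K)%nat; lra.
      * intros k Hk. destruct (k <=? K)%nat eqn:E; [apply Nat.leb_le in E; lia|lra].
    + rewrite S_INR, HK.
      assert (yb - ya = (b - a) / (2 * h)) by (unfold ya, yb; field; lra).
      assert (IZR z1 - IZR z0 + 1 <= (b - a) / (2 * h) + 2) by lra.
      assert ((IZR z1 - IZR z0 + 1) * h <= ((b - a) / (2 * h) + 2) * h)
        by (apply Rmult_le_compat_r; lra).
      replace ((b - a) / 2 + 2 * h) with (((b - a) / (2 * h) + 2) * h) by (field; lra). lra.
Qed.

Lemma OMle_finunion (F : nat -> R -> Prop) (c : nat -> R) K :
  (forall k, OMle (F k) (c k)) -> OMle (fun x => exists k, (k <= K)%nat /\ F k x) (sum_f_R0 c K).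
Proof.
  intros H. induction K.
  - simpl. apply (OMle_ext (F O)); auto. intros x; split; [intros; exists O; auto|].
    intros [k [Hk Hx]]. replace k with O in Hx by lia. auto.
  - simpl. apply (OMle_ext (fun x => (exists k, (k <= K)%nat /\ F k x) \/ F (S K) x)).
    + intros x; split.
      * intros [[k [Hk Hx]]|Hx]; [exists k; split; auto|exists (S K); auto].
      * intros [k [Hk Hx]]. destruct (Nat.eq_dec k (S K)); [subst; auto|left; exists k; split; auto; lia].
    + apply OMle_union; auto.
Qed.

Lemma sum_half_const (f : nat -> R) c K :
  sum_f_R0 (fun k => f k / 2 + c) K = sum_f_R0 f K / 2 + INR (S K) * c.
Proof. induction K; simpl sum_f_R0; [simpl; lra|]. rewrite IHK. rewrite (S_INR (S K)). lra. Qed.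

Lemma sum_shift (f : nat -> R) K n :
  sum_f_R0 (fun k => f (k + S K)%nat) n = sum_f_R0 f (n + S K) - sum_f_R0 f K.
Proof.
  induction n.
  - simpl. lra.
  - simpl sum_f_R0 at 1. rewrite IHn. replace (S n + S K)%nat with (S (n + S K)) by lia.
    change (sum_f_R0 f (S (n + S K))) with (sum_f_R0 f (n + S K) + f (S (n + S K))). lra.
Qed.

Lemma pow2_small eps : 0 < eps -> exists N, forall n, (N <= n)%nat -> / 2 ^ n <= eps.
Proof.
  intros He. destruct (archimed_cor1 eps He) as [N [HN HN0]]. exists N. intros n Hn.
  assert (HI : forall k, INR k <= 2 ^ k).
  { induction k; [simpl; lra|]. rewrite S_INR. change (2 ^ S k) with (2 * 2 ^ k). assert (1 <= 2 ^ k) by (apply pow_R1_Rle; lra). lra. }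
  assert (0 < INR N) by (apply lt_0_INR; auto).
  assert (INR N <= 2 ^ n) by (apply Rle_trans with (2 ^ N); auto; apply Rle_pow; auto; lra).
  assert (/ 2 ^ n <= / INR N) by (apply Rinv_le_contravar; auto). lra.
Qed.

Lemma key E B delta p : OMle E B -> 0 < delta -> exists N, forall n, (N <= n)%nat ->
  om (fun x => E x /\ Par (/ 2 ^ n) p x) <= om E / 2 + delta.
Proof.
  intros HE Hd.
  destruct (om_approx E B (delta/3) HE ltac:(lra)) as (a & b & [Hab Hc] & Hs).
  destruct (series_cv (fun k => b k - a k) (om E + delta/3)) as (s & Hcv & Hsle & Hps); auto.
  { intros k; specialize (Hab k); lra. }
  destruct (Hcv (delta/3)) as [K HK]; [lra|]. specialize (HK K (le_n _)).
  unfold R_dist in HK. apply Rabs_def2 in HK.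
  assert (HSK : 0 < INR (S K)) by (apply lt_0_INR; lia).
  destruct (pow2_small (delta / (6 * INR (S K)))) as [N HN].
  { apply Rdiv_lt_0_compat; lra. }
  exists N. intros n Hn. specialize (HN n Hn). set (h := / 2 ^ n) in *.
  assert (Hh : 0 < h) by (apply Rinv_0_lt_compat, pow_lt; lra).
  set (U := fun x => exists k, (k <= K)%nat /\ (a k <= x <= b k /\ Par h p x)).
  set (Tl := fun x => exists k, (K < k)%nat /\ a k <= x <= b k).
  assert (HU : OMle U (sum_f_R0 (fun k => (b k - a k) / 2 + 2 * h) K)).
  { apply (OMle_finunion (fun k x => a k <= x <= b k /\ Par h p x)).
    intros k. apply Par_interval; auto. }
  rewrite (sum_half_const (fun k => b k - a k)) in HU.
  assert (HT : OMle Tl (s - sum_f_R0 (fun k => b k - a k) K)).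
  { exists (fun k => a (k + S K)%nat), (fun k => b (k + S K)%nat). split; [split|].
    - intros k; auto.
    - intros x [k [Hk Hx]]. exists (k - S K)%nat. replace (k - S K + S K)%nat with k by lia. auto.
    - intros m. rewrite (sum_shift (fun k => b k - a k)). specialize (Hps (m + S K)%nat). lra. }
  assert (om (fun x => E x /\ Par h p x) <= om U + om Tl).
  { refine (om_sub _ _ _ _ _ _ HU HT). intros x [Hx Hp]. destruct (Hc x Hx) as [k Hk].
    destruct (le_lt_dec k K); [left; exists k; auto|right; exists k; auto]. }
  assert (om U <= sum_f_R0 (fun k => b k - a k) K / 2 + INR (S K) * (2 * h)) by (apply om_le; auto).
  assert (om Tl <= s - sum_f_R0 (fun k => b k - a k) K) by (apply om_le; auto).
  assert (INR (S K) * h <= delta / 6).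
  { apply Rle_trans with (INR (S K) * (delta / (6 * INR (S K)))).
    - apply Rmult_le_compat_l; lra.
    - right. field. lra. }
  lra.
Qed.

Definition Iv (n j : nat) (x : R) : Prop := INR j / 2 ^ n <= x < (INR j + 1) / 2 ^ n.

Lemma div_le_iff a P x : 0 < P -> (a / P <= x <-> a <= x * P).
Proof.
  intros HP. split; intros H.
  - apply (Rmult_le_compat_r P) in H; [|lra]. unfold Rdiv in H.
    rewrite Rmult_assoc, Rinv_l in H; lra.
  - apply (Rmult_le_reg_r P); auto. unfold Rdiv. rewrite Rmult_assoc, Rinv_l; lra.
Qed.

Lemma div_lt_iff a P x : 0 < P -> (x < a / P <-> x * P < a).
Proof.
  intros HP. split; intros H.
  - apply (Rmult_lt_compat_r P) in H; [|lra]. unfold Rdiv in H.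
    rewrite Rmult_assoc, Rinv_l in H; lra.
  - apply (Rmult_lt_reg_r P); auto. unfold Rdiv. rewrite Rmult_assoc, Rinv_l; lra.
Qed.

Lemma pow2_pos n : 0 < 2 ^ n.
Proof. apply pow_lt; lra. Qed.

Lemma Iv_sc n j x : Iv n j x <-> INR j <= x * 2 ^ n < INR j + 1.
Proof.
  unfold Iv. rewrite (div_le_iff _ _ _ (pow2_pos n)), (div_lt_iff _ _ _ (pow2_pos n)). tauto.
Qed.

Lemma Iv_uniq n j j' x : Iv n j x -> Iv n j' x -> j = j'.
Proof.
  rewrite !Iv_sc. intros H1 H2.
  assert (j < S j')%nat by (apply INR_lt; rewrite S_INR; lra).
  assert (j' < S j)%nat by (apply INR_lt; rewrite S_INR; lra). lia.
Qed.

Lemma INR2 : INR 2 = 2.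
Proof. simpl. lra. Qed.

Lemma Iv_sub m n i k x y : (m <= n)%nat -> Iv n i x -> Iv m k x -> Iv n i y -> Iv m k y.
Proof.
  intros Hmn. rewrite !Iv_sc.
  replace n with (m + (n - m))%nat by lia. rewrite pow_add.
  set (D := 2 ^ (n - m)). assert (HD : INR (2 ^ (n - m)) = D) by (rewrite pow_INR, INR2; auto).
  assert (HD0 : 0 < D) by apply pow2_pos.
  set (Dn := (2 ^ (n - m))%nat) in *.
  intros H1 H2 H3.
  assert (Hk1 : (k * Dn < i + 1)%nat).
  { apply INR_lt. rewrite mult_INR, plus_INR, HD. simpl (INR 1). nra. }
  assert (Hk2 : (i < (k + 1) * Dn)%nat).
  { apply INR_lt. rewrite mult_INR, plus_INR, HD. simpl (INR 1). nra. }
  assert (A1 : INR k * D <= INR i) by (rewrite <- HD, <- mult_INR; apply le_INR; lia).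
  assert (A2 : INR i + 1 <= (INR k + 1) * D).
  { rewrite <- HD. replace (INR k + 1) with (INR (k + 1)) by (rewrite plus_INR; auto).
    rewrite <- mult_INR. replace (INR i + 1) with (INR (i + 1)) by (rewrite plus_INR; auto).
    apply le_INR; lia. }
  rewrite <- Rmult_assoc in H3. nra.
Qed.

Lemma dy01 m A x : dyadic_family m A -> A x -> 0 <= x < 1.
Proof.
  intros [J HJ] Hx. apply HJ in Hx. destruct Hx as (j & Hj & _ & Hx).
  change (Iv m j x) in Hx. rewrite Iv_sc in Hx.
  assert (0 <= INR j) by apply pos_INR.
  assert (INR j + 1 <= 2 ^ m).
  { rewrite <- INR2, <- pow_INR. rewrite <- S_INR. apply le_INR. lia. }
  assert (H2 := pow2_pos m). split; nra.
Qed.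

Lemma dy_const m A n i x y : dyadic_family m A -> (m <= n)%nat -> Iv n i x -> Iv n i y -> A x -> A y.
Proof.
  intros HA Hmn Hx Hy Ax. destruct HA as [J HJ].
  apply HJ in Ax. destruct Ax as (k & Hk & HJk & Hkx). apply HJ. exists k. split; [|split]; auto.
  change (Iv m k y). apply (Iv_sub m n i k x y); auto.
Qed.

Lemma floor_nat y : 0 <= y -> exists j, INR j <= y < INR j + 1.
Proof.
  intros Hy. destruct (fl_spec y) as [H1 H2].
  assert (Hz' : IZR (-1) < IZR (fl y)) by lra. apply lt_IZR in Hz'.
  assert (Hz : (0 <= fl y)%Z) by lia.
  exists (Z.to_nat (fl y)). rewrite INR_IZR_INZ, Z2Nat.id; auto.
Qed.

Lemma Iv_exists n x : 0 <= x < 1 -> exists j, (j < 2 ^ n)%nat /\ Iv n j x.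
Proof.
  intros Hx. assert (H2 := pow2_pos n).
  destruct (floor_nat (x * 2 ^ n)) as [j Hj]; [nra|].
  exists j. split; [|rewrite Iv_sc; auto].
  apply INR_lt. rewrite pow_INR, INR2. nra.
Qed.

Definition Apart (n : nat) (A : R -> Prop) (p : nat) (x : R) : Prop :=
  A x /\ exists i, Iv n (2 * i + p) x.

Lemma Apart_dy m A n p : dyadic_family m A -> (m <= n)%nat -> dyadic_family n (Apart n A p).
Proof.
  intros HA Hmn.
  exists (fun j => (exists i, j = (2 * i + p)%nat) /\ exists y, A y /\ Iv n j y).
  intros x. split.
  - intros [Ax [i Hi]]. exists (2 * i + p)%nat. split; [|split; [split; eauto|exact Hi]].
    destruct (Iv_exists n x) as (j & Hj & Hj') ; [apply (dy01 m A); auto|].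
    rewrite (Iv_uniq _ _ _ _ Hi Hj'). auto.
  - intros (j & Hj & [[i ->] (y & Ay & Hy)] & Hx). split; [|exists i; exact Hx].
    apply (dy_const m A n (2*i+p) y x); auto.
Qed.

Lemma A_split m A n x : dyadic_family m A -> A x -> Apart n A 0 x \/ Apart n A 1 x.
Proof.
  intros HA Ax. destruct (Iv_exists n x) as (j & _ & Hj); [apply (dy01 m A); auto|].
  destruct (Nat.Even_or_Odd j) as [[i ->]|[i ->]].
  - left. split; auto. exists i. rewrite Nat.add_0_r; auto.
  - right. split; auto. exists i. auto.
Qed.

Lemma Apart_disj n A x : ~ (Apart n A 0 x /\ Apart n A 1 x).
Proof.
  intros [[_ [i Hi]] [_ [i' Hi']]]. pose proof (Iv_uniq _ _ _ _ Hi Hi'). lia.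
Qed.

Lemma Apart_shift m A n x : dyadic_family m A -> (m < n)%nat ->
  (Apart n A 1 x <-> Apart n A 0 (x - / 2 ^ n)).
Proof.
  intros HA Hmn. destruct n as [|n]; [lia|].
  assert (Hp : 2 ^ S n = 2 * 2 ^ n) by auto.
  assert (H0 := pow2_pos n).
  assert (Hxh : (x - / 2 ^ S n) * 2 ^ S n = x * 2 ^ S n - 1) by (field; lra).
  assert (Hsc : forall y, y * 2 ^ S n = 2 * (y * 2 ^ n)) by (intros; rewrite Hp; ring).
  split.
  - intros [Ax [i Hi]]. rewrite Iv_sc in Hi.
    assert (Hi2 : Iv (S n) (2 * i + 0) (x - / 2 ^ S n)).
    { rewrite Iv_sc, Hxh. rewrite plus_INR in *. simpl (INR 0). simpl (INR 1) in Hi. lra. }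
    split; [|exists i; auto].
    assert (HI1 : Iv n i x).
    { rewrite Iv_sc. rewrite Hsc, plus_INR, mult_INR, INR2 in Hi. simpl (INR 1) in Hi. lra. }
    assert (HI2 : Iv n i (x - / 2 ^ S n)).
    { rewrite Iv_sc in Hi2 |- *. rewrite Hsc, plus_INR, mult_INR, INR2 in Hi2. simpl (INR 0) in Hi2. lra. }
    apply (dy_const m A n i x); auto. lia.
  - intros [Ax [i Hi]]. rewrite Iv_sc, Hxh in Hi.
    assert (Hi2 : Iv (S n) (2 * i + 1) x).
    { rewrite Iv_sc. rewrite plus_INR in *. simpl (INR 0) in Hi. simpl (INR 1). lra. }
    split; [|exists i; auto].
    assert (HI1 : Iv n i x).
    { rewrite Iv_sc. rewrite Iv_sc, Hsc, plus_INR, mult_INR, INR2 in Hi2. simpl (INR 1) in Hi2. lra. }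
    assert (HI2 : Iv n i (x - / 2 ^ S n)).
    { rewrite Iv_sc. rewrite <- Hxh in Hi. rewrite Hsc, plus_INR, mult_INR, INR2 in Hi.
      simpl (INR 0) in Hi. lra. }
    apply (dy_const m A n i (x - / 2 ^ S n) x); auto. lia.
Qed.

Lemma Apart_par n A p x : Apart n A p x -> Par (/ 2 ^ n) (INR p) x.
Proof.
  intros [_ [i Hi]]. exists i. rewrite Iv_sc, plus_INR, mult_INR, INR2 in Hi.
  assert (H := pow2_pos n).
  assert (E : forall c, c * / 2 ^ n <= x <-> c <= x * 2 ^ n).
  { intros c. change (c * / 2 ^ n) with (c / 2 ^ n). apply div_le_iff; auto. }
  assert (E' : forall c, x < c * / 2 ^ n <-> x * 2 ^ n < c).
  { intros c. change (c * / 2 ^ n) with (c / 2 ^ n). apply div_lt_iff; auto. }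
  rewrite E, E'. lra.
Qed.

Lemma sgn_pos s : 0 < s -> sgn s = 1.
Proof. intros H. unfold sgn. destruct Rlt_dec; [auto|lra]. Qed.
Lemma sgn_neg s : s < 0 -> sgn s = -1.
Proof. intros H. unfold sgn. destruct Rlt_dec; [lra|]. destruct Rlt_dec; [auto|lra]. Qed.

Lemma rad_arg n i x : 2 ^ n * PI * x = PI * (x * 2 ^ n - 2 * INR i) + 2 * INR i * PI.
Proof. ring. Qed.

Lemma rad_even n i x : Iv n (2 * i + 0) x -> INR (2 * i + 0) < x * 2 ^ n -> rademacher n x = 1.
Proof.
  intros Hi Hlt. rewrite Iv_sc in Hi. unfold rademacher. rewrite (rad_arg n i), sin_period.
  rewrite plus_INR, mult_INR, INR2 in *. simpl (INR 0) in *. apply sgn_pos.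
  assert (HP := PI_RGT_0). apply sin_gt_0; nra.
Qed.

Lemma rad_odd n i x : Iv n (2 * i + 1) x -> INR (2 * i + 1) < x * 2 ^ n -> rademacher n x = -1.
Proof.
  intros Hi Hlt. rewrite Iv_sc in Hi. unfold rademacher. rewrite (rad_arg n i), sin_period.
  rewrite plus_INR, mult_INR, INR2 in *. simpl (INR 1) in *. apply sgn_neg.
  assert (HP := PI_RGT_0). apply sin_lt_0; nra.
Qed.

Lemma sum_zero (f : nat -> R) n : (forall k, f k = 0) -> sum_f_R0 f n = 0.
Proof. intros H. induction n; simpl; rewrite H; [|rewrite IHn]; lra. Qed.

Lemma null_points (S : R -> Prop) n : (forall x, S x -> exists j, x * 2 ^ n = INR j) ->
  outer_measure_is S 0.
Proof.
  intros H. apply OM_omi. split.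
  - intros B HB. apply (OMle_nonneg S); auto.
  - intros eps He. exists (fun k => INR k / 2 ^ n), (fun k => INR k / 2 ^ n).
    split; [split|].
    + intros k; lra.
    + intros x Hx. destruct (H x Hx) as [j Hj]. exists j.
      assert (x = INR j / 2 ^ n) by (rewrite <- Hj; field; apply Rgt_not_eq, pow2_pos). lra.
    + intros m. rewrite sum_zero; [lra|]. intros; lra.
Qed.

Lemma rad_null0 n A : outer_measure_is (fun x => Apart n A 0 x /\ rademacher n x <> 1) 0.
Proof.
  apply (null_points _ n). intros x [[_ [i Hi]] Hr]. exists (2 * i + 0)%nat.
  pose proof Hi as Hi'. rewrite Iv_sc in Hi'.
  destruct (Rle_lt_or_eq_dec _ _ (proj1 Hi')) as [Hlt|Heq]; [|auto].
  exfalso. apply Hr. apply (rad_even n i); auto.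
Qed.

Lemma rad_null1 n A : outer_measure_is (fun x => Apart n A 1 x /\ rademacher n x <> -1) 0.
Proof.
  apply (null_points _ n). intros x [[_ [i Hi]] Hr]. exists (2 * i + 1)%nat.
  pose proof Hi as Hi'. rewrite Iv_sc in Hi'.
  destruct (Rle_lt_or_eq_dec _ _ (proj1 Hi')) as [Hlt|Heq]; [|auto].
  exfalso. apply Hr. apply (rad_odd n i); auto.
Qed.

Definition SL := list (R * (R -> bool) * R).

Lemma eval_app (l1 l2 : SL) x : simple_eval (l1 ++ l2) x = simple_eval l1 x + simple_eval l2 x.
Proof. induction l1; simpl; [lra|]. unfold simple_eval in *. simpl. rewrite IHl1. lra. Qed.

Lemma integral_app (l1 l2 : SL) : simple_integral (l1 ++ l2) = simple_integral l1 + simple_integral l2.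
Proof. induction l1; simpl; [lra|]. unfold simple_integral in *. simpl. rewrite IHl1. lra. Qed.

Definition suppin (A : R -> Prop) (l : SL) :=
  Forall (fun q => forall y, snd (fst q) y = true -> A y) l.

Lemma eval_out (A : R -> Prop) (l : SL) x : suppin A l -> ~ A x -> simple_eval l x = 0.
Proof.
  induction 1 as [|q l Hq Hl IH]; intros Hx; simpl; auto.
  unfold simple_eval in *. simpl. rewrite IH; auto.
  destruct (snd (fst q) x) eqn:E; [exfalso; apply Hx; apply Hq; auto|lra].
Qed.

Definition SBF (A : R -> Prop) (q : R * (R -> bool) * R) : Prop :=
  0 <= fst (fst q) /\ measure_is (fun x => snd (fst q) x = true) (snd q) /\
  (forall x, snd (fst q) x = true -> A x).

Lemma SBF_supp A l : Forall (SBF A) l -> suppin A l.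
Proof. intros H. unfold suppin. eapply Forall_impl; [|exact H]. intros q Hq; apply Hq. Qed.

Lemma sb_unfold g A v : simple_below g A v <->
  exists l : SL, Forall (SBF A) l /\ (forall x, A x -> simple_eval l x <= g x) /\ simple_integral l = v.
Proof. reflexivity. Qed.


Lemma sb_nil g A : (forall x, A x -> 0 <= g x) -> simple_below g A 0.
Proof. intros Hg. exists nil. repeat split; auto. Qed.

Lemma SBF_mono A A' q : (forall x, A x -> A' x) -> SBF A q -> SBF A' q.
Proof. intros H (H1 & H2 & H3). split; [|split]; auto. Qed.

Lemma sb_mono g A A' v : (forall x, A x -> A' x) -> (forall x, A' x -> ~ A x -> 0 <= g x) ->
  simple_below g A v -> simple_below g A' v.
Proof.
  intros HAA Hg (l & Hl & Hle & Hv). exists l. split; [|split]; auto.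
  - eapply Forall_impl; [|exact Hl]. intros q; apply SBF_mono; auto.
  - intros x Hx. destruct (classic (A x)); auto.
    rewrite (eval_out A); auto. apply SBF_supp; auto.
Qed.

Lemma sb_union g A A0 A1 v0 v1 : (forall x, A0 x -> A x) -> (forall x, A1 x -> A x) ->
  (forall x, ~ (A0 x /\ A1 x)) -> (forall x, A x -> A0 x \/ A1 x) ->
  simple_below g A0 v0 -> simple_below g A1 v1 -> simple_below g A (v0 + v1).
Proof.
  intros H0 H1 Hd Hc (l0 & Hl0 & Hle0 & Hv0) (l1 & Hl1 & Hle1 & Hv1).
  exists (l0 ++ l1). split; [|split].
  - apply Forall_app. split; (eapply Forall_impl; [|eassumption]); intros q; apply SBF_mono; auto.
  - intros x Hx. rewrite eval_app. destruct (classic (A0 x)) as [HA0|HA0].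
    + rewrite (eval_out A1 l1); [|apply SBF_supp; auto|intros HA1; apply (Hd x); auto].
      specialize (Hle0 x HA0). lra.
    + rewrite (eval_out A0 l0); [|apply SBF_supp; auto|auto].
      destruct (Hc x Hx) as [HA1|HA1]; [contradiction|].
      specialize (Hle1 x HA1). lra.
  - rewrite integral_app. subst. auto.
Qed.

Lemma int_exists g A : nonneg_L1_01 g -> (forall x, A x -> unit_interval x) ->
  exists I, integral_is g A I /\ 0 <= I.
Proof.
  intros (_ & Hg & v & [Hvub Hvl]) HA.
  destruct (completeness (simple_below g A)) as [I HI].
  - exists v. intros w Hw. apply Hvub. apply (sb_mono g A); auto.
  - exists 0. apply sb_nil. auto.
  - exists I. split; auto. apply (proj1 HI). apply sb_nil; auto.
Qed.

Lemma superadd g A A0 A1 I I0 I1 : (forall x, A0 x -> A x) -> (forall x, A1 x -> A x) ->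
  (forall x, ~ (A0 x /\ A1 x)) -> (forall x, A x -> A0 x \/ A1 x) ->
  integral_is g A I -> integral_is g A0 I0 -> integral_is g A1 I1 -> I0 + I1 <= I.
Proof.
  intros H0 H1 Hd Hc [HIu HIl] [HI0u HI0l] [HI1u HI1l].
  assert (I1 <= I - I0); [|lra].
  apply HI1l. intros w1 Hw1.
  assert (I0 <= I - w1); [|lra].
  apply HI0l. intros w0 Hw0.
  assert (w0 + w1 <= I); [|lra]. apply HIu. apply (sb_union g A A0 A1); auto.
Qed.

Definition pb (P : Prop) : bool := if excluded_middle_informative P then true else false.

Lemma pb_spec b P : (andb b (pb P) = true) <-> (b = true /\ P).
Proof. unfold pb. destruct excluded_middle_informative; destruct b; simpl; intuition congruence. Qed.

Definition rset (B : R -> Prop) (q : R * (R -> bool) * R) : R -> bool :=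
  fun x => andb (snd (fst q) x) (pb (B x)).

Definition restr (B : R -> Prop) (l : SL) : SL :=
  map (fun q => ((fst (fst q), rset B q), om (fun x => rset B q x = true))) l.

Definition sumc (l : SL) : R := fold_right (fun (q : R * (R -> bool) * R) acc => fst (fst q) + acc) 0 l.

Lemma restr_SBF B A l : meas B -> (forall x, B x -> A x) -> Forall (SBF A) l -> Forall (SBF B) (restr B l).
Proof.
  intros HB HBA. induction 1 as [|q l Hq Hl IH]; simpl; constructor; auto.
  destruct Hq as (Hc & [Hm Ho] & Hs). simpl. split; [auto|split].
  - split.
    + apply meas_leb. apply (meas_ext (fun x => snd (fst q) x = true /\ B x)).
      * apply meas_inter; auto. apply leb_meas; auto.
      * intros x. unfold rset. simpl. rewrite pb_spec. tauto.
    + apply OM_omi. apply (om_spec _ (snd q + 1)).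
      apply (OMle_set _ (fun x => snd (fst q) x = true)).
      * intros x. unfold rset; simpl. rewrite pb_spec. tauto.
      * apply omi_OM in Ho. apply (proj2 Ho). lra.
  - intros x. unfold rset; simpl. rewrite pb_spec. tauto.
Qed.

Lemma restr_eval B (l : SL) x : Forall (fun q => 0 <= fst (fst q)) l ->
  simple_eval (restr B l) x <= simple_eval l x.
Proof.
  induction 1 as [|q l Hq Hl IH]; simpl; [lra|]. unfold simple_eval in *. simpl.
  unfold rset. destruct (snd (fst q) x); simpl; [destruct (pb (B x))|]; lra.
Qed.

Lemma sumc_nonneg (l : SL) : Forall (fun q => 0 <= fst (fst q)) l -> 0 <= sumc l.
Proof. induction 1; simpl; lra. Qed.

Lemma restr_int B (l : SL) d : Forall (fun q => 0 <= fst (fst q) /\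
    snd q / 2 - d <= om (fun x => rset B q x = true)) l ->
  simple_integral l / 2 - d * sumc l <= simple_integral (restr B l).
Proof.
  induction 1 as [|q l [Hc Hq] Hl IH]; simpl; [lra|]. unfold simple_integral in *. simpl.
  assert (fst (fst q) * (snd q / 2 - d) <= fst (fst q) * om (fun x => rset B q x = true))
    by (apply Rmult_le_compat_l; auto).
  lra.
Qed.

Lemma list_N {X : Type} (P : X -> nat -> Prop) (l : list X) :
  Forall (fun q => exists N, forall n, (N <= n)%nat -> P q n) l ->
  exists N, forall n, (N <= n)%nat -> Forall (fun q => P q n) l.
Proof.
  induction 1 as [|q l [N1 H1] Hl [N2 H2]].
  - exists O. intros; constructor.
  - exists (max N1 N2). intros n Hn. constructor; [apply H1|apply H2]; lia.
Qed.

Lemma measure_dy k X : dyadic_family k X -> OMle X 1 /\ measure_is X (om X).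
Proof.
  intros HX. assert (H1 : OMle X 1).
  { apply (OMle_B _ (1 - 0)); [|lra]. apply (OMle_set _ (fun x => 0 <= x <= 1)).
    - intros x Hx. apply (dy01 k X) in Hx; auto. lra.
    - apply OMle_interval; lra. }
  split; auto. split.
  - apply meas_leb. apply (dyadic_meas k); auto.
  - apply OM_omi. apply (om_spec _ 1); auto.
Qed.

Lemma entry_N m A q d : dyadic_family m A -> SBF A q -> 0 < d ->
  exists N, forall n, (N <= n)%nat -> forall p, (p = 0 \/ p = 1)%nat -> (m < n)%nat ->
    snd q / 2 - d <= om (fun x => rset (Apart n A p) q x = true).
Proof.
  intros HA (Hc & [Hm Ho] & Hs) Hd.
  set (E := fun x => snd (fst q) x = true) in *.
  apply omi_OM in Ho. assert (HE : OMle E (snd q + 1)) by (apply (proj2 Ho); lra).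
  assert (He : snd q = om E) by (apply (OM_unique E); auto; apply (om_spec _ _ HE)).
  destruct (key E _ d (INR 0) HE Hd) as [N0 HN0].
  destruct (key E _ d (INR 1) HE Hd) as [N1 HN1].
  exists (max N0 N1). intros n Hn p Hp Hmn.
  assert (HAp : forall p', meas (Apart n A p')).
  { intros p'. apply (dyadic_meas n). apply (Apart_dy m); auto. lia. }
  rewrite (om_ext _ (fun x => E x /\ Apart n A p x)) by (intros x; unfold rset, E; rewrite pb_spec; tauto).
  pose proof (meas_eq _ E _ (HAp p) HE) as Heq.
  assert (om (fun x => E x /\ ~ Apart n A p x) <= om E / 2 + d).
  { destruct Hp as [-> | ->].
    - apply Rle_trans with (om (fun x => E x /\ Par (/ 2 ^ n) (INR 1) x)); [|apply HN1; lia].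
      apply (om_mono _ _ (snd q + 1)).
      + intros x [Ex Hn0]. split; auto. apply (Apart_par n A). destruct (A_split m A n x HA (Hs x Ex)); tauto.
      + apply (OMle_set _ E); tauto.
    - apply Rle_trans with (om (fun x => E x /\ Par (/ 2 ^ n) (INR 0) x)); [|apply HN0; lia].
      apply (om_mono _ _ (snd q + 1)).
      + intros x [Ex Hn0]. split; auto. apply (Apart_par n A). destruct (A_split m A n x HA (Hs x Ex)); tauto.
      + apply (OMle_set _ E); tauto. }
  lra.
Qed.

Lemma lowerb g m A lam IA : nonneg_L1_01 g -> dyadic_family m A -> 0 < lam < 1 ->
  integral_is g A IA -> exists N, forall n, (N <= n)%nat -> (m < n)%nat ->
  forall p, (p = 0 \/ p = 1)%nat -> forall I, integral_is g (Apart n A p) I -> lam / 2 * IA <= I.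
Proof.
  intros Hg HA Hlam [HIu HIl].
  assert (HgA : forall x, A x -> 0 <= g x).
  { intros x Hx. apply (proj1 (proj2 Hg)). apply (dy01 m A) in Hx; auto. unfold unit_interval; lra. }
  assert (HI0 : 0 <= IA) by (apply HIu, sb_nil; auto).
  destruct (Req_dec IA 0) as [Hz|Hnz].
  - exists O. intros n _ _ p _ I [HI _]. rewrite Hz.
    assert (0 <= I); [|lra]. apply HI. apply sb_nil. intros x [Ax _]; auto.
  - assert (exists w, simple_below g A w /\ (1 + lam) / 2 * IA < w) as (w & Hw & Hwlt).
    { apply NNPP. intros Hn. assert (IA <= (1 + lam) / 2 * IA); [|nra].
      apply HIl. intros w Hw. apply Rnot_lt_le. intros Hlt. apply Hn. eauto. }
    destruct Hw as (l & Hl & Hle & Hv).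
    assert (Hcl : Forall (fun q => 0 <= fst (fst q)) l).
    { eapply Forall_impl; [|exact Hl]. intros q Hq; apply Hq. }
    assert (Hs0 := sumc_nonneg l Hcl).
    set (d := (1 - lam) / 4 * IA / (sumc l + 1)).
    assert (Hd : 0 < d) by (unfold d; apply Rdiv_lt_0_compat; nra).
    destruct (list_N (fun q n => forall p, (p = 0 \/ p = 1)%nat -> (m < n)%nat ->
       snd q / 2 - d <= om (fun x => rset (Apart n A p) q x = true)) l) as [N HN].
    { eapply Forall_impl; [|exact Hl]. intros q Hq. apply (entry_N m A q d); auto. }
    exists N. intros n Hn Hmn p Hp I [HI _].
    assert (Hr : simple_integral l / 2 - d * sumc l <= simple_integral (restr (Apart n A p) l)).
    { apply restr_int. specialize (HN n Hn). apply Forall_forall. intros q Hq.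
      rewrite Forall_forall in HN, Hcl. split; [apply Hcl; auto|apply (HN q Hq p Hp Hmn)]. }
    assert (simple_integral (restr (Apart n A p) l) <= I).
    { apply HI. exists (restr (Apart n A p) l). split; [|split; auto].
      - apply (restr_SBF _ A); auto.
        + apply (dyadic_meas n). apply (Apart_dy m); auto. lia.
        + intros x [Ax _]; auto.
      - intros x [Ax Hx]. apply Rle_trans with (simple_eval l x); [apply restr_eval; auto|auto]. }
    assert (d * sumc l <= (1 - lam) / 4 * IA).
    { apply Rle_trans with (d * (sumc l + 1)); [apply Rmult_le_compat_l; lra|].
      right. unfold d. field. lra. }
    lra.
Qed.

Theorem lemma3p1 (g : R -> R) (m : nat) (A : R -> Prop) (lam : R) :
  nonneg_L1_01 g ->
  dyadic_family m A ->
  0 < lam < 1 ->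
  exists n_lam : nat, (m < n_lam)%nat /\
    forall n : nat, (n_lam <= n)%nat ->
      exists A0 A1 : R -> Prop,
        dyadic_family n A0 /\ dyadic_family n A1 /\
        (forall x, A x <-> (A0 x \/ A1 x)) /\
        (forall x, ~ (A0 x /\ A1 x)) /\
        (* (1) *)
        (exists mA mA0 mA1, measure_is A mA /\ measure_is A0 mA0 /\
           measure_is A1 mA1 /\ mA0 = mA / 2 /\ mA1 = mA / 2) /\
        (* (2) *)
        (exists IA IA0 IA1, integral_is g A IA /\ integral_is g A0 IA0 /\
           integral_is g A1 IA1 /\
           lam / 2 * IA <= IA0 <= 1 / (2 * lam) * IA /\
           lam / 2 * IA <= IA1 <= 1 / (2 * lam) * IA) /\
        (* (3) r_n = (-1)^i on A_i, almost everywhere *)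
        outer_measure_is (fun x => A0 x /\ rademacher n x <> 1) 0 /\
        outer_measure_is (fun x => A1 x /\ rademacher n x <> -1) 0.
Proof.
  intros Hg HA Hlam.
  assert (HAu : forall x, A x -> unit_interval x).
  { intros x Hx. apply (dy01 m A) in Hx; auto. unfold unit_interval; lra. }
  destruct (int_exists g A Hg HAu) as (IA & HIA & HIA0).
  destruct (lowerb g m A lam IA Hg HA Hlam HIA) as [N HN].
  exists (max N (S m)). split; [lia|]. intros n Hn.
  assert (Hmn : (m < n)%nat) by lia.
  exists (Apart n A 0), (Apart n A 1).
  assert (HD0 : dyadic_family n (Apart n A 0)) by (apply (Apart_dy m); auto; lia).
  assert (HD1 : dyadic_family n (Apart n A 1)) by (apply (Apart_dy m); auto; lia).
  split; [auto|]. split; [auto|]. split.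
  { intros x; split; [apply (A_split m); auto|]. intros [[Ax _]|[Ax _]]; auto. }
  split; [apply Apart_disj|]. split; [|split; [|split]].
  - destruct (measure_dy m A HA) as [HA1 HmA].
    destruct (measure_dy n _ HD0) as [H01 Hm0].
    destruct (measure_dy n _ HD1) as [H11 Hm1].
    exists (om A), (om (Apart n A 0)), (om (Apart n A 1)). split; [auto|split; [auto|split; [auto|]]].
    pose proof (meas_eq _ A _ (dyadic_meas n _ HD0) HA1) as Heq.
    rewrite (om_ext (fun x => A x /\ Apart n A 0 x) (Apart n A 0)) in Heq by (intros x; unfold Apart; tauto).
    rewrite (om_ext (fun x => A x /\ ~ Apart n A 0 x) (Apart n A 1)) in Heq.
    2:{ intros x; split.
        - intros [Ax Hn0]. destruct (A_split m A n x HA Ax); tauto.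
        - intros H1. split; [apply H1|]. intros H0. apply (Apart_disj n A x); auto. }
    assert (Hsh : om (Apart n A 1) = om (Apart n A 0)).
    { rewrite (om_ext _ (fun x => Apart n A 0 (x - / 2 ^ n))).
      - apply (om_shift _ 1); auto.
      - intros x. apply (Apart_shift m); auto. }
    split; lra.
  - assert (Hs0 : forall x, Apart n A 0 x -> unit_interval x) by (intros x [Ax _]; auto).
    assert (Hs1 : forall x, Apart n A 1 x -> unit_interval x) by (intros x [Ax _]; auto).
    destruct (int_exists g _ Hg Hs0) as (I0 & HI0 & _).
    destruct (int_exists g _ Hg Hs1) as (I1 & HI1 & _).
    exists IA, I0, I1. split; [auto|split; [auto|split; [auto|]]].
    assert (L0 : lam / 2 * IA <= I0) by (apply (HN n ltac:(lia) Hmn 0%nat); auto).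
    assert (L1 : lam / 2 * IA <= I1) by (apply (HN n ltac:(lia) Hmn 1%nat); auto).
    assert (Hsup : I0 + I1 <= IA).
    { apply (superadd g A (Apart n A 0) (Apart n A 1)); auto.
      - intros x [Ax _]; auto.
      - intros x [Ax _]; auto.
      - apply Apart_disj.
      - intros x Ax. apply (A_split m); auto. }
    assert (Hq : (1 - lam / 2) * IA <= 1 / (2 * lam) * IA).
    { apply Rmult_le_compat_r; auto.
      assert (1 / (2 * lam) - (1 - lam / 2) = (1 - lam) ^ 2 / (2 * lam)) by (field; lra).
      assert (0 <= (1 - lam) ^ 2 / (2 * lam)).
      { apply Rmult_le_pos; [apply pow2_ge_0|]. left; apply Rinv_0_lt_compat; lra. }
      lra. }
    split; split; lra.
  - apply rad_null0.
  - apply rad_null1.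
Qed.
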